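(* Let $a$ be an integer, let $n$ be a positive odd integer, and let $q\neq 1$ be a positive real number. Define the $n\times n$ matrices $$A=\left[q^{\lfloor\frac{aj-(a+1)k}{n}\rfloor}\right]_{1\leqslant j,k\leqslant n},\qquad A'=\left[q^{\lceil\frac{(a+1)j-ak}{n}\rceil}\right]_{1\leqslant j,k\leqslant n}.$$ If $\gcd(a(a+1),n)>1$, then $$\operatorname{rank}(A)\leqslant\frac n3\quad\text{and}\quad \operatorname{rank}(A')\leqslant\frac n3.$$
   Context: $\lfloor x\rfloor$ is the largest integer not exceeding $x$ and $\lceil x\rceil$ is the least integer not smaller than $x$. *)

(* Defs.v *)
From HB Require Import structures.
From mathcomp Require Import all_boot all_order all_algebra.
Set Implicit Arguments. Unset Strict Implicit. Unset Printing Implicit Defensive.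
Import Order.TTheory GRing.Theory Num.Theory.
Local Open Scope ring_scope.

(* floor of the rational number x / n for n > 0 : intdiv's Euclidean quotient,
   which for a positive divisor is exactly the floor. *)
Definition floor_div (x : int) (n : nat) : int := (x %/ n%:Z)%Z.
Definition ceil_div (x : int) (n : nat) : int := - ((- x) %/ n%:Z)%Z.

(* A = [ q ^ floor((a j - (a+1) k)/n) ]_{1<=j,k<=n}, indices shifted: j = i+1. *)
Definition matA (R : unitRingType) (q : R) (a : int) (n : nat) : 'M[R]_n :=
  \matrix_(j < n, k < n)
    q ^ (floor_div (a * (j.+1)%:Z - (a + 1) * (k.+1)%:Z) n).

Definition matA' (R : unitRingType) (q : R) (a : int) (n : nat) : 'M[R]_n :=
  \matrix_(j < n, k < n)
    q ^ (ceil_div ((a + 1) * (j.+1)%:Z - a * (k.+1)%:Z) n).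

(* Main.v *)
Require Import Defs.
From HB Require Import structures.
From mathcomp Require Import all_boot all_order all_algebra.
From mathcomp Require Import all_reals.
From mathcomp Require Import zify ring.
Import Order.TTheory GRing.Theory Num.Theory.
Local Open Scope ring_scope.

Lemma rank_period (F : fieldType) n (M : 'M[F]_n) t : (0 < t)%N -> (t <= n)%N ->
  (forall i i0 : 'I_n, i = (i0 + t)%N :> nat -> exists c, forall k, M i k = c * M i0 k) ->
  (\rank M <= t)%N.
Proof.
move=> t0 tn H.
pose f := fun i : 'I_t => widen_ord tn i.
apply: leq_trans (rank_leq_row (rowsub f M)).
apply: mxrankS; apply/row_subP.
suff S: forall k (i : 'I_n), (i < k)%N -> (row i M <= rowsub f M)%MS.
  by move=> i; apply: (S n.+1 i); have := ltn_ord i; lia.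
elim=> [|k IH] i //.
move=> ik.
case: (ltnP i t) => it.
- have -> : i = f (Ordinal it) by apply: val_inj.
  rewrite -row_rowsub; exact: row_sub.
- have i0n : (i - t < n)%N by have := ltn_ord i; lia.
  have [c Hc] := H i (Ordinal i0n) (esym (subnK it)).
  have -> : row i M = c *: row (Ordinal i0n) M by apply/rowP => j; rewrite !mxE Hc.
  apply: scalemx_sub; apply: IH => /=; move: ik t0 it; move: (nat_of_ord i) => m; clear; lia.
Qed.

Lemma floor_shift x m n : (0 < n)%N -> floor_div (x + m * n%:Z) n = m + floor_div x n.
Proof.
move=> n0; rewrite /floor_div addrC divzMDl //; by rewrite eqz_nat -lt0n.
Qed.

Lemma ceil_shift x m n : (0 < n)%N -> ceil_div (x + m * n%:Z) n = m + ceil_div x n.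
Proof.
move=> n0; rewrite /ceil_div.
have -> : - (x + m * n%:Z) = (- m) * n%:Z + - x by ring.
rewrite divzMDl; last by rewrite eqz_nat -lt0n.
by rewrite opprD opprK.
Qed.

Theorem lemma3p1 (R : realType) (a : int) (n : nat) (q : R) :
  (0 < n)%N -> odd n -> 0 < q -> q != 1 ->
  1 < gcdz (a * (a + 1)) n%:Z ->
  (3 * \rank (matA q a n) <= n)%N /\ (3 * \rank (matA' q a n) <= n)%N.
Proof.
move=> n0 on q0 q1 hg.
have qn0 : q != 0 by rewrite gt_eqF.
rewrite /gcdz ltz_nat in hg.
set g := gcdn _ _ in hg.
set p := pdiv g.
have pp : prime p := pdiv_prime hg.
have pg : (p %| g)%N := pdiv_dvd g.
have pn : (p %| n)%N by apply: dvdn_trans pg (dvdn_gcdr _ _).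
have pa : (p %| `|(a * (a + 1))%R|)%N by apply: dvdn_trans pg (dvdn_gcdl _ _).
have p3 : (3 <= p)%N.
  have p2 : p != 2%N by apply/eqP => e; move: pn; rewrite e dvdn2 on.
  have := prime_gt1 pp; move: p2; move: (p) => r; clear; lia.
set t := (n %/ p)%N.
have ntp : n = (t * p)%N by rewrite divnK.
have t0 : (0 < t)%N by move: n0; rewrite ntp muln_gt0 => /andP[].
have tn : (t <= n)%N by rewrite ntp leq_pmulr ?prime_gt0.
have h3 : (3 * t <= n)%N by rewrite [in X in (_ <= X)%N]ntp mulnC leq_mul2l p3 orbT.
have key : forall b : int, (p %| `|b|)%N -> b * t%:Z = (b %/ p%:Z)%Z * n%:Z.
  move=> b pb.
  have bp : (p%:Z %| b)%Z by rewrite dvdzE.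
  rewrite -{1}(divzK bp) ntp PoszM; ring.
have idx : forall (i i0 : 'I_n), i = (i0 + t)%N :> nat -> (i.+1)%:Z = (i0.+1)%:Z + t%:Z.
  by move=> i i0 ->; rewrite -PoszD addSn.
rewrite abszM Euclid_dvdM // in pa.
case/orP: pa => pa.
- split.
  + apply: leq_trans h3; rewrite leq_mul2l /=.
    apply: rank_period => // i i0 e.
    exists (q ^ (a %/ p%:Z)%Z) => k; rewrite !mxE (idx _ _ e).
    rewrite -expfzDr // -(floor_shift _ _ _ n0) -(key _ pa); congr (_ ^ _); congr floor_div; ring.
  + apply: leq_trans h3; rewrite leq_mul2l /= -mxrank_tr.
    apply: rank_period => // i i0 e.
    exists (q ^ (- (a %/ p%:Z)%Z)) => k; rewrite !mxE (idx _ _ e).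
    rewrite -expfzDr // -(ceil_shift _ _ _ n0) mulNr -(key _ pa); congr (_ ^ _); congr ceil_div; ring.
- split.
  + apply: leq_trans h3; rewrite leq_mul2l /= -mxrank_tr.
    apply: rank_period => // i i0 e.
    exists (q ^ (- ((a + 1) %/ p%:Z)%Z)) => k; rewrite !mxE (idx _ _ e).
    rewrite -expfzDr // -(floor_shift _ _ _ n0) mulNr -(key _ pa); congr (_ ^ _); congr floor_div; ring.
  + apply: leq_trans h3; rewrite leq_mul2l /=.
    apply: rank_period => // i i0 e.
    exists (q ^ ((a + 1) %/ p%:Z)%Z) => k; rewrite !mxE (idx _ _ e).
    rewrite -expfzDr // -(ceil_shift _ _ _ n0) -(key _ pa); congr (_ ^ _); congr ceil_div; ring.
Qed.
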